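(* Let $K$ be an infinite compact Hausdorff space. Then $biort_1(C(K))=s(K)$.
   Context: $C(K)$ is the Banach space of continuous real functions on $K$ with the sup norm; functionals on $C(K)$ are identified with Radon measures $\mu\in M(K)$, $\mu(f)=\int f\,d\mu$; $\delta_x$ is the Dirac measure at $x$. A measure is $n$-supported if it equals $a_1\delta_{x_1}+\dots+a_n\delta_{x_n}$ for some $x_k\in K$, $a_k\in\mathbb R$. A biorthogonal system $(f_i,\mu_i)_{i\in I}$ in $C(K)$ ($\mu_i(f_i)=1$, $\mu_i(f_j)=0$ for $i\neq j$) is $n$-supported if all $\mu_i$ are $n$-supported; $biort_n(C(K))$ is the supremum of $|I|$ over $n$-supported biorthogonal systems. $s(K)$ is the supremum of cardinalities of discrete subspaces of $K$. *)

(* Defs.v *)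
From Stdlib Require Import Reals List.
Open Scope R_scope.

Definition is_topology {X : Type} (open : (X -> Prop) -> Prop) : Prop :=
  open (fun _ => True) /\ open (fun _ => False) /\
  (forall U V, open U -> open V -> open (fun x => U x /\ V x)) /\
  (forall C : (X -> Prop) -> Prop, (forall U, C U -> open U) ->
      open (fun x => exists U, C U /\ U x)).

Definition compact_space {X : Type} (open : (X -> Prop) -> Prop) : Prop :=
  forall C : (X -> Prop) -> Prop,
    (forall U, C U -> open U) -> (forall x, exists U, C U /\ U x) ->
    exists l : list (X -> Prop), Forall C l /\ forall x, exists U, In U l /\ U x.

Definition hausdorff {X : Type} (open : (X -> Prop) -> Prop) : Prop :=
  forall x y : X, x <> y -> exists U V, open U /\ open V /\ U x /\ V y /\
    forall z, ~ (U z /\ V z).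

Definition infinite_type (X : Type) : Prop :=
  ~ exists l : list X, forall x, In x l.

Definition R_open (U : R -> Prop) : Prop :=
  forall y, U y -> exists eps, 0 < eps /\ forall z, Rabs (z - y) < eps -> U z.

Definition continuous_real {X : Type} (open : (X -> Prop) -> Prop) (f : X -> R) : Prop :=
  forall U, R_open U -> open (fun x => U (f x)).

Definition discrete_subspace {X : Type} (open : (X -> Prop) -> Prop) (D : X -> Prop) : Prop :=
  forall x, D x -> exists U, open U /\ U x /\ forall y, D y -> U y -> y = x.

Definition card_le (A B : Type) : Prop := exists g : A -> B, forall a a', g a = g a' -> a = a'.

Fixpoint finsum (n : nat) (g : nat -> R) : R :=
  match n with O => 0 | S m => finsum m g + g m end.

(** The n-supported measure  a_0 δ_{x_0} + ... + a_{n-1} δ_{x_{n-1}}  applied to f. *)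
Definition nsupp_apply {X : Type} (n : nat) (pts : nat -> X) (coef : nat -> R) (f : X -> R) : R :=
  finsum n (fun k => coef k * f (pts k)).

Definition nsupp_biorth_system {X : Type} (open : (X -> Prop) -> Prop) (n : nat)
    (I : Type) (f : I -> X -> R) (pts : I -> nat -> X) (coef : I -> nat -> R) : Prop :=
  (forall i, continuous_real open (f i)) /\
  (forall i, nsupp_apply n (pts i) (coef i) (f i) = 1) /\
  (forall i j, i <> j -> nsupp_apply n (pts i) (coef i) (f j) = 0).

(** "biort_n(C(K)) <= kappa": kappa bounds the size of every n-supported biorthogonal system. *)
Definition biort_le {X : Type} (open : (X -> Prop) -> Prop) (n : nat) (kappa : Type) : Prop :=
  forall (I : Type) f pts coef, nsupp_biorth_system open n I f pts coef -> card_le I kappa.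

Definition spread_le {X : Type} (open : (X -> Prop) -> Prop) (kappa : Type) : Prop :=
  forall D : X -> Prop, discrete_subspace open D -> card_le {x : X | D x} kappa.

(* Main.v *)
Require Import Defs.
From Stdlib Require Import Reals List Lra Lia Classical ClassicalEpsilon FunctionalExtensionality PropExtensionality.
Open Scope R_scope.

Lemma set_ext {X : Type} (A B : X -> Prop) : (forall x, A x <-> B x) -> A = B.
Proof. intros H; apply functional_extensionality; intro x; apply propositional_extensionality; auto. Qed.

Lemma open_ext {X : Type} (open : (X -> Prop) -> Prop) (A B : X -> Prop) :
  open A -> (forall x, A x <-> B x) -> open B.
Proof. intros HA H; rewrite <- (set_ext A B H); exact HA. Qed.

Lemma open_nn {X : Type} (open : (X -> Prop) -> Prop) (A : X -> Prop) :
  open A -> open (fun x => ~ ~ A x).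
Proof. intros HA; apply (open_ext _ A); auto. intro x; split; [tauto| apply NNPP]. Qed.

Lemma open_nbhd {X : Type} (open : (X -> Prop) -> Prop) (Ht : is_topology open) (S : X -> Prop) :
  (forall x, S x -> exists N, open N /\ N x /\ forall y, N y -> S y) -> open S.
Proof.
  destruct Ht as (_&_&_&Hu). intros H.
  apply open_ext with (A := fun x => exists U, (open U /\ forall y, U y -> S y) /\ U x).
  - apply Hu. intros U [HU _]; exact HU.
  - intro x; split.
    + intros [U [[_ HS] Hx]]; auto.
    + intro Hx; destruct (H x Hx) as [N [HN [HNx HNS]]]; exists N; auto.
Qed.

Lemma sep {X : Type} (open : (X -> Prop) -> Prop) (Ht : is_topology open) (Hc : compact_space open)
  (F G : X -> Prop) :
  open (fun z => ~ G z) ->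
  (forall y, G y -> exists U W, open U /\ open W /\ (forall z, F z -> U z) /\ W y /\ (forall z, ~ (U z /\ W z))) ->
  exists U V, open U /\ open V /\ (forall z, F z -> U z) /\ (forall z, G z -> V z) /\ (forall z, ~ (U z /\ V z)).
Proof.
  intros HG Hloc.
  destruct (Hc (fun W => open W /\ ((forall z, W z -> ~ G z) \/ exists U, open U /\ (forall z, F z -> U z) /\ forall z, ~ (U z /\ W z)))) as [l [Hl Hcov]].
  - intros U [HU _]; exact HU.
  - intro x. destruct (classic (G x)) as [Gx|nGx].
    + destruct (Hloc x Gx) as [U [W [HU [HW [HFU [HWx Hd]]]]]]. exists W.
      split; [split; [exact HW| right; exists U; auto] | exact HWx].
    + exists (fun z => ~ G z). split; [split; [exact HG | left; auto] | exact nGx].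
  - assert (Hfin: exists U, open U /\ (forall z, F z -> U z) /\ forall W, In W l -> (forall z, W z -> ~ G z) \/ (forall z, ~ (U z /\ W z))).
    { clear Hcov. revert Hl. induction l as [|W l IH]; intros Hl.
      - exists (fun _ => True). split; [apply Ht | split; [auto | intros W []]].
      - pose proof (Forall_inv Hl) as HCW. pose proof (Forall_inv_tail Hl) as Hl'.
        destruct (IH Hl') as [U [HU [HFU HUl]]].
        destruct HCW as [HW [Hleft | [U' [HU' [HFU' Hd']]]]].
        + exists U. split; auto. split; auto. intros W' [<-|Hin]; auto.
        + exists (fun z => U z /\ U' z). split; [apply Ht; auto|]. split; [auto|]. intros W' [<-|Hin].
          * right. intros z [[_ ?] ?]. apply (Hd' z); auto.
          * destruct (HUl W' Hin) as [?|Hd]; [left; auto| right; intros z [[? _] ?]; apply (Hd z); auto]. }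
    destruct Hfin as [U [HU [HFU HUl]]].
    exists U, (fun z => exists W, (In W l /\ open W /\ forall z', ~ (U z' /\ W z')) /\ W z).
    split; auto. split.
    + destruct Ht as (_&_&_&Hu). apply (Hu (fun W => In W l /\ open W /\ forall z', ~ (U z' /\ W z'))).
      intros W (_&HW&_); exact HW.
    + split; auto. split.
      * intros z Gz. destruct (Hcov z) as [W [Hin Wz]]. exists W. destruct (HUl W Hin) as [Hl'|Hd].
        -- exfalso; exact (Hl' z Wz Gz).
        -- rewrite Forall_forall in Hl. destruct (Hl W Hin) as [HW _]. repeat split; auto.
      * intros z [Uz [W [[_ [_ Hd]] Wz]]]. exact (Hd z (conj Uz Wz)).
Qed.

Lemma regular {X : Type} (open : (X -> Prop) -> Prop) (Ht : is_topology open) (Hc : compact_space open)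
  (Hh : hausdorff open) (x : X) (G : X -> Prop) :
  open (fun z => ~ G z) -> ~ G x ->
  exists U V, open U /\ open V /\ U x /\ (forall z, G z -> V z) /\ (forall z, ~ (U z /\ V z)).
Proof.
  intros HG nGx.
  destruct (sep open Ht Hc (fun z => z = x) G HG) as [U [V (HU&HV&HFU&HGV&Hd)]].
  - intros y Gy. assert (Hxy : x <> y) by (intros ->; auto).
    destruct (Hh x y Hxy) as [U [W (HU&HW&Ux&Wy&Hd)]]. exists U, W. repeat split; auto.
    intros z ->; auto.
  - exists U, V. repeat split; auto.
Qed.

Lemma normal {X : Type} (open : (X -> Prop) -> Prop) (Ht : is_topology open) (Hc : compact_space open)
  (Hh : hausdorff open) (F G : X -> Prop) :
  open (fun z => ~ F z) -> open (fun z => ~ G z) -> (forall z, ~ (F z /\ G z)) ->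
  exists U V, open U /\ open V /\ (forall z, F z -> U z) /\ (forall z, G z -> V z) /\ (forall z, ~ (U z /\ V z)).
Proof.
  intros HF HG Hd. apply (sep open Ht Hc F G HG).
  intros y Gy. assert (nFy : ~ F y) by (intro; apply (Hd y); auto).
  destruct (regular open Ht Hc Hh y F HF nFy) as [U [V (HU&HV&Uy&HFV&Hd')]].
  exists V, U. repeat split; auto. intros z [? ?]; apply (Hd' z); auto.
Qed.

Definition rel {X : Type} (open : (X -> Prop) -> Prop) (A B : X -> Prop) : Prop :=
  exists Fc, open (fun z => ~ Fc z) /\ (forall z, A z -> Fc z) /\ (forall z, Fc z -> B z).

Lemma rel_sub {X : Type} open (A B : X -> Prop) : rel open A B -> forall z, A z -> B z.
Proof. intros [F (_&H1&H2)] z Hz; auto. Qed.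

Lemma interp_ex {X : Type} (open : (X -> Prop) -> Prop) (Ht : is_topology open) (Hc : compact_space open)
  (Hh : hausdorff open) (A B : X -> Prop) :
  open B -> rel open A B -> exists V, open V /\ rel open A V /\ rel open V B.
Proof.
  intros HB [F (HF&HAF&HFB)].
  destruct (normal open Ht Hc Hh F (fun z => ~ B z) HF (open_nn open B HB)) as [U [V (HU&HV&HFU&HGV&Hd)]].
  - intros z [Fz nBz]; auto.
  - exists U. split; auto. split.
    + exists F. repeat split; auto.
    + exists (fun z => ~ V z). split; [apply open_nn; auto|]. split.
      * intros z Uz Vz; apply (Hd z); auto.
      * intros z nVz. apply NNPP; intro nBz; auto.
Qed.
Fixpoint lev {X : Type} (V0 W : X -> Prop) (ip : (X -> Prop) -> (X -> Prop) -> (X -> Prop)) (n k : nat) : X -> Prop :=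
  match n with
  | O => match k with O => V0 | S _ => W end
  | S n' => if Nat.even k then lev V0 W ip n' (Nat.div2 k)
            else ip (lev V0 W ip n' (Nat.div2 k)) (lev V0 W ip n' (S (Nat.div2 k)))
  end.

Lemma levS {X : Type} V0 W ip n k : @lev X V0 W ip (S n) k =
  if Nat.even k then lev V0 W ip n (Nat.div2 k)
  else ip (lev V0 W ip n (Nat.div2 k)) (lev V0 W ip n (S (Nat.div2 k))).
Proof. reflexivity. Qed.

Lemma levE {X : Type} V0 W ip n q : @lev X V0 W ip (S n) (2 * q) = lev V0 W ip n q.
Proof. rewrite levS. rewrite Nat.even_mul, Nat.div2_double. reflexivity. Qed.

Lemma levO {X : Type} V0 W ip n q : @lev X V0 W ip (S n) (S (2 * q)) = ip (lev V0 W ip n q) (lev V0 W ip n (S q)).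
Proof. rewrite levS. rewrite Nat.even_succ, Nat.odd_mul, Nat.div2_succ_double. reflexivity. Qed.

Lemma lev0 {X : Type} V0 W ip n : @lev X V0 W ip n 0 = V0.
Proof. induction n; [reflexivity|]. change 0%nat with (2 * 0)%nat. rewrite levE. exact IHn. Qed.

Definition Inv {X : Type} open (V0 W : X -> Prop) ip n : Prop :=
  forall k, (k <= 2 ^ n)%nat -> open (lev V0 W ip n k) /\ (forall z, lev V0 W ip n k z -> W z) /\
    ((k < 2 ^ n)%nat -> rel open (lev V0 W ip n k) (lev V0 W ip n (S k))).

Lemma Inv_all {X : Type} (open : (X -> Prop) -> Prop) (V0 W : X -> Prop) ip :
  open V0 -> open W -> rel open V0 W ->
  (forall A B, open B -> rel open A B -> open (ip A B) /\ rel open A (ip A B) /\ rel open (ip A B) B) ->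
  forall n, Inv open V0 W ip n.
Proof.
  intros HV0 HW Hr Hip. induction n as [|n IH].
  - intros k Hk. simpl in Hk. destruct k as [|[|k]]; simpl.
    + split; [auto| split; [exact (rel_sub _ _ _ Hr) | intros _; exact Hr]].
    + repeat split; auto. intros; lia.
    + lia.
  - assert (H2 : (2 ^ S n = 2 * 2 ^ n)%nat) by reflexivity.
    intros k Hk. destruct (Nat.Even_or_Odd k) as [[q ->]|[q ->]].
    + rewrite levE. assert (Hq : (q <= 2 ^ n)%nat) by lia.
      destruct (IH q Hq) as (Ho&Hs&Hrel). repeat split; auto.
      intros Hlt. rewrite levO. assert (Hq' : (q < 2 ^ n)%nat) by lia.
      destruct (IH (S q) ltac:(lia)) as (Ho'&_&_).
      destruct (Hip _ _ Ho' (Hrel Hq')) as (_&?&_); auto.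
    + replace (2 * q + 1)%nat with (S (2 * q)) in * by lia. rewrite levO.
      assert (Hq : (q < 2 ^ n)%nat) by lia.
      destruct (IH q ltac:(lia)) as (_&_&Hrel).
      destruct (IH (S q) ltac:(lia)) as (Ho'&Hs'&_).
      destruct (Hip _ _ Ho' (Hrel Hq)) as (Ho&_&Hr2). repeat split; auto.
      * intros z Hz. apply Hs'. apply (rel_sub _ _ _ Hr2); auto.
      * intros _. replace (S (S (2 * q))) with (2 * S q)%nat by lia. rewrite levE. exact Hr2.
Qed.

Lemma chain {X : Type} open (V0 W : X -> Prop) ip n : Inv open V0 W ip n ->
  forall j k, (j <= k)%nat -> (k <= 2 ^ n)%nat -> forall z, lev V0 W ip n j z -> lev V0 W ip n k z.
Proof.
  intros HI j k Hjk. induction Hjk as [|k Hjk IH]; intros Hk z Hz; auto.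
  destruct (HI k ltac:(lia)) as (_&_&Hr). apply (rel_sub _ _ _ (Hr ltac:(lia))). apply IH; auto; lia.
Qed.

Fixpoint cntb (P : nat -> Prop) (N : nat) : nat :=
  match N with O => O | S N' => (cntb P N' + (if excluded_middle_informative (P N') then 0 else 1))%nat end.

Lemma cntb_le P N : (cntb P N <= N)%nat.
Proof. induction N; simpl; [lia|]. destruct (excluded_middle_informative (P N)); lia. Qed.

Lemma cntb_up P : forall N j, (j <= N)%nat -> (forall k, (j <= k < N)%nat -> P k) -> (cntb P N <= j)%nat.
Proof.
  induction N as [|N IH]; intros j Hj H; simpl; [lia|].
  destruct (Nat.eq_dec j (S N)) as [->|Hne].
  - pose proof (cntb_le P N). destruct (excluded_middle_informative (P N)); lia.
  - destruct (excluded_middle_informative (P N)) as [p|np].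
    + rewrite Nat.add_0_r. apply IH; [lia|]. intros k Hk; apply H; lia.
    + exfalso; apply np, H; lia.
Qed.

Lemma cntb_all P N : (forall k, (k < N)%nat -> ~ P k) -> cntb P N = N.
Proof.
  induction N as [|N IH]; intros H; simpl; auto.
  rewrite IH by (intros; apply H; lia).
  destruct (excluded_middle_informative (P N)) as [p|]; [exfalso; apply (H N); auto|lia].
Qed.

Lemma cntb_mono P N p : (cntb P N <= cntb P (N + p))%nat.
Proof.
  induction p; [rewrite Nat.add_0_r; lia|]. rewrite Nat.add_succ_r; simpl.
  destruct (excluded_middle_informative (P (N + p)%nat)); lia.
Qed.

Lemma cntb_low P N j : (j < N)%nat -> (forall k, (k <= j)%nat -> ~ P k) -> (S j <= cntb P N)%nat.
Proof.
  intros Hj H. rewrite <- (cntb_all P (S j)) by (intros; apply H; lia).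
  replace N with (S j + (N - S j))%nat by lia. apply cntb_mono.
Qed.

Definition cnt {X : Type} (V0 W : X -> Prop) ip n x := cntb (fun k => lev V0 W ip n k x) (2 ^ n).

Lemma CU {X : Type} open (V0 W : X -> Prop) ip n x j : Inv open V0 W ip n ->
  (j <= 2 ^ n)%nat -> lev V0 W ip n j x -> (cnt V0 W ip n x <= j)%nat.
Proof. intros HI Hj Hx. apply cntb_up; auto. intros k Hk. apply (chain open V0 W ip n HI j k); auto; lia. Qed.

Lemma CL {X : Type} open (V0 W : X -> Prop) ip n x j : Inv open V0 W ip n ->
  (j < 2 ^ n)%nat -> ~ lev V0 W ip n j x -> (S j <= cnt V0 W ip n x)%nat.
Proof. intros HI Hj Hx. apply cntb_low; auto. intros k Hk Hl. apply Hx. apply (chain open V0 W ip n HI k j); auto; lia. Qed.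

Lemma cnt_le {X : Type} (V0 W : X -> Prop) ip n x : (cnt V0 W ip n x <= 2 ^ n)%nat.
Proof. apply cntb_le. Qed.

Lemma L1 {X : Type} open (V0 W : X -> Prop) ip n x : Inv open V0 W ip n -> Inv open V0 W ip (S n) ->
  (cnt V0 W ip (S n) x <= 2 * cnt V0 W ip n x)%nat.
Proof.
  intros HI HI'. set (m := cnt V0 W ip n x). assert (H2 : (2 ^ S n = 2 * 2 ^ n)%nat) by reflexivity.
  destruct (Nat.lt_ge_cases m (2 ^ n)) as [Hm|Hm].
  - assert (Hx : lev V0 W ip n m x).
    { apply NNPP; intro Hn. pose proof (CL open V0 W ip n x m HI Hm Hn). unfold m in *; lia. }
    apply (CU open V0 W ip (S n) x (2 * m) HI'); [lia|]. rewrite levE; exact Hx.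
  - pose proof (cnt_le V0 W ip (S n) x). lia.
Qed.

Lemma L2 {X : Type} open (V0 W : X -> Prop) ip n x : Inv open V0 W ip n -> Inv open V0 W ip (S n) ->
  (2 * cnt V0 W ip n x <= S (cnt V0 W ip (S n) x))%nat.
Proof.
  intros HI HI'. pose proof (cnt_le V0 W ip n x). assert (H2 : (2 ^ S n = 2 * 2 ^ n)%nat) by reflexivity.
  destruct (cnt V0 W ip n x) as [|m1] eqn:Em; [lia|].
  assert (Hx : ~ lev V0 W ip n m1 x).
  { intro Hl. pose proof (CU open V0 W ip n x m1 HI ltac:(lia) Hl). lia. }
  rewrite <- levE in Hx. pose proof (CL open V0 W ip (S n) x (2 * m1) HI' ltac:(lia) Hx). lia.
Qed.
Definition hh {X : Type} (V0 W : X -> Prop) ip n x : R := INR (cnt V0 W ip n x) * (/2) ^ n.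

Lemma hpos : forall n, 0 < (/2) ^ n.
Proof. intro n; apply pow_lt; lra. Qed.

Lemma h_step {X : Type} open (V0 W : X -> Prop) ip n x : (forall n, Inv open V0 W ip n) ->
  hh V0 W ip (S n) x <= hh V0 W ip n x /\ hh V0 W ip n x - hh V0 W ip (S n) x <= (/2) ^ (S n).
Proof.
  intros HI. pose proof (L1 open V0 W ip n x (HI n) (HI (S n))) as H1.
  pose proof (L2 open V0 W ip n x (HI n) (HI (S n))) as H2.
  apply le_INR in H1. apply le_INR in H2. rewrite mult_INR in H1, H2. rewrite (S_INR (cnt V0 W ip (S n) x)) in H2.
  change (INR 2) with (1 + 1) in H1, H2.
  unfold hh. change ((/2) ^ (S n)) with (/2 * (/2) ^ n). pose proof (hpos n).
  set (a := INR (cnt V0 W ip n x)) in *. set (b := INR (cnt V0 W ip (S n) x)) in *.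
  set (t := (/2)^n) in *.
  assert (0 <= (2 * a - b) * t) by (apply Rmult_le_pos; lra).
  assert (0 <= (b + 1 - 2 * a) * t) by (apply Rmult_le_pos; lra).
  split; lra.
Qed.

Lemma h_tele {X : Type} open (V0 W : X -> Prop) ip n x : (forall n, Inv open V0 W ip n) ->
  forall p, hh V0 W ip (n + p) x <= hh V0 W ip n x /\
            hh V0 W ip n x - hh V0 W ip (n + p) x + (/2) ^ (n + p) <= (/2) ^ n.
Proof.
  intros HI p. induction p as [|p IH]; [rewrite Nat.add_0_r; lra|].
  rewrite Nat.add_succ_r. destruct (h_step open V0 W ip (n + p) x HI) as [A B].
  change ((/2) ^ (S (n + p))) with (/2 * (/2) ^ (n + p)) in *. lra.
Qed.

Lemma h_nonneg {X : Type} (V0 W : X -> Prop) ip n x : 0 <= hh V0 W ip n x.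
Proof. unfold hh. apply Rmult_le_pos; [apply pos_INR| left; apply hpos]. Qed.

Lemma h_all {X : Type} open (V0 W : X -> Prop) ip x : (forall n, Inv open V0 W ip n) ->
  forall m n, hh V0 W ip n x - (/2) ^ n <= hh V0 W ip m x.
Proof.
  intros HI m n. destruct (Nat.le_gt_cases n m) as [H|H].
  - replace m with (n + (m - n))%nat by lia. destruct (h_tele open V0 W ip n x HI (m - n)) as [_ B].
    pose proof (hpos (n + (m - n))). lra.
  - replace n with (m + (n - m))%nat by lia. destruct (h_tele open V0 W ip m x HI (n - m)) as [A _].
    pose proof (hpos (m + (n - m))). lra.
Qed.

Definition Eset {X : Type} (V0 W : X -> Prop) ip x : R -> Prop := fun r => exists n, r = - hh V0 W ip n x.

Lemma Eb {X : Type} (V0 W : X -> Prop) ip x : bound (Eset V0 W ip x).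
Proof. exists 0. intros r [n ->]. pose proof (h_nonneg V0 W ip n x); lra. Qed.

Lemma Ene {X : Type} (V0 W : X -> Prop) ip x : exists r, Eset V0 W ip x r.
Proof. exists (- hh V0 W ip 0 x). exists 0%nat. reflexivity. Qed.

Definition ff {X : Type} (V0 W : X -> Prop) ip x : R :=
  - proj1_sig (completeness (Eset V0 W ip x) (Eb V0 W ip x) (Ene V0 W ip x)).

Lemma ff_le {X : Type} (V0 W : X -> Prop) ip x n : ff V0 W ip x <= hh V0 W ip n x.
Proof.
  unfold ff. destruct (completeness _ _ _) as [L HLub]. simpl. destruct HLub as [HL _].
  assert (- hh V0 W ip n x <= L) by (apply HL; exists n; reflexivity). lra.
Qed.

Lemma ff_ge {X : Type} open (V0 W : X -> Prop) ip x n : (forall n, Inv open V0 W ip n) ->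
  hh V0 W ip n x - (/2) ^ n <= ff V0 W ip x.
Proof.
  intros HI. unfold ff. destruct (completeness _ _ _) as [L HLub]. simpl. destruct HLub as [_ HL].
  assert (L <= - hh V0 W ip n x + (/2) ^ n).
  { apply HL. intros r [m ->]. pose proof (h_all open V0 W ip x HI m n). lra. }
  lra.
Qed.

Lemma ff_ge0 {X : Type} (V0 W : X -> Prop) ip x : 0 <= ff V0 W ip x.
Proof.
  unfold ff. destruct (completeness _ _ _) as [L HLub]. simpl. destruct HLub as [_ HL].
  assert (L <= 0). { apply HL. intros r [m ->]. pose proof (h_nonneg V0 W ip m x). lra. } lra.
Qed.

Lemma small (eps : R) : 0 < eps -> exists n, (/2) ^ n < eps.
Proof.
  intros He. destruct (pow_lt_1_zero (/2) ltac:(rewrite Rabs_pos_eq; lra) eps He) as [N HN].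
  exists N. specialize (HN N (le_n N)). rewrite Rabs_pos_eq in HN; auto. left; apply hpos.
Qed.

Lemma h_local {X : Type} (open : (X -> Prop) -> Prop) (Ht : is_topology open) (V0 W : X -> Prop) ip n x :
  (forall n, Inv open V0 W ip n) ->
  exists N, open N /\ N x /\ forall y, N y -> Rabs (hh V0 W ip n y - hh V0 W ip n x) <= (/2) ^ n.
Proof.
  intros HI. set (m := cnt V0 W ip n x). pose proof (cnt_le V0 W ip n x) as Hmle.
  assert (N1 : exists N, open N /\ N x /\ forall y, N y -> (cnt V0 W ip n y <= m)%nat).
  { destruct (Nat.lt_ge_cases m (2 ^ n)) as [Hm|Hm].
    - assert (Hx : lev V0 W ip n m x).
      { apply NNPP; intro Hn. pose proof (CL open V0 W ip n x m (HI n) Hm Hn). unfold m in *; lia. }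
      exists (lev V0 W ip n m). destruct (HI n m ltac:(lia)) as (Ho&_&_). split; auto. split; auto.
      intros y Hy. apply (CU open V0 W ip n y m (HI n)); auto; lia.
    - exists (fun _ => True). split; [apply Ht|]. split; auto. intros y _.
      pose proof (cnt_le V0 W ip n y). lia. }
  assert (N2 : exists N, open N /\ N x /\ forall y, N y -> (m <= S (cnt V0 W ip n y))%nat).
  { destruct m as [|[|j]] eqn:Em.
    - exists (fun _ => True). split; [apply Ht|]. split; auto. intros; lia.
    - exists (fun _ => True). split; [apply Ht|]. split; auto. intros; lia.
    - assert (Hx : ~ lev V0 W ip n (S j) x).
      { intro Hl. pose proof (CU open V0 W ip n x (S j) (HI n) ltac:(lia) Hl). unfold m in Em. lia. }
      destruct (HI n j ltac:(lia)) as (_&_&Hr). destruct (Hr ltac:(lia)) as [F (HF&HjF&HFj)].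
      exists (fun z => ~ F z). split; auto. split; [intro Fx; apply Hx; auto|].
      intros y nFy. assert (Hy : ~ lev V0 W ip n j y) by (intro; apply nFy; auto).
      pose proof (CL open V0 W ip n y j (HI n) ltac:(lia) Hy). lia. }
  destruct N1 as [N1 (HN1&N1x&H1)]. destruct N2 as [N2 (HN2&N2x&H2)].
  exists (fun z => N1 z /\ N2 z). split; [apply Ht; auto|]. split; auto.
  intros y [Y1 Y2]. specialize (H1 y Y1). specialize (H2 y Y2).
  apply le_INR in H1. apply le_INR in H2. rewrite S_INR in H2.
  unfold hh. fold m. pose proof (hpos n).
  set (a := INR m) in *. set (b := INR (cnt V0 W ip n y)) in *. set (t := (/2)^n) in *.
  replace (b * t - a * t) with ((b - a) * t) by ring. rewrite Rabs_mult, (Rabs_pos_eq t) by lra.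
  assert (Rabs (b - a) <= 1) by (unfold Rabs; destruct (Rcase_abs (b - a)); lra).
  nra.
Qed.
Lemma abs_bound (z a : R) : Rabs z <= a -> - a <= z <= a.
Proof. intros H. pose proof (Rle_abs z). pose proof (Rle_abs (- z)). rewrite Rabs_Ropp in *. lra. Qed.

Lemma urys {X : Type} (open : (X -> Prop) -> Prop) (Ht : is_topology open) (Hc : compact_space open)
  (Hh : hausdorff open) (d : X) (W : X -> Prop) :
  open W -> W d -> exists g, continuous_real open g /\ g d = 1 /\ forall y, ~ W y -> g y = 0.
Proof.
  intros HW Wd.
  destruct (regular open Ht Hc Hh d (fun z => ~ W z) (open_nn open W HW) (fun H => H Wd))
    as [U [V (HU&HV&Ud&HGV&Hd)]].
  assert (Hr : rel open U W).
  { exists (fun z => ~ V z). split; [apply open_nn; auto|]. split.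
    - intros z Uz Vz; apply (Hd z); auto.
    - intros z nVz. apply NNPP; intro nWz; auto. }
  set (ip := fun A B : X -> Prop => epsilon (inhabits A) (fun V' => open V' /\ rel open A V' /\ rel open V' B)).
  assert (Hip : forall A B, open B -> rel open A B -> open (ip A B) /\ rel open A (ip A B) /\ rel open (ip A B) B).
  { intros A B HB HAB. unfold ip. apply (epsilon_spec (inhabits A) (fun V' => open V' /\ rel open A V' /\ rel open V' B)).
    apply interp_ex; auto. }
  pose proof (Inv_all open U W ip HU HW Hr Hip) as HI.
  exists (fun x => 1 - ff U W ip x). split; [|split].
  - intros O HO. apply open_nbhd; auto. intros x Ox. destruct (HO _ Ox) as [eps [He Heps]].
    destruct (small (eps / 3)) as [n Hn]; [lra|].
    destruct (h_local open Ht U W ip n x HI) as [N (HN&Nx&HNb)]. exists N. split; auto; split; auto.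
    intros y Ny. apply Heps.
    pose proof (ff_le U W ip y n). pose proof (ff_ge open U W ip y n HI).
    pose proof (ff_le U W ip x n). pose proof (ff_ge open U W ip x n HI).
    pose proof (abs_bound _ _ (HNb y Ny)). apply Rabs_def1; lra.
  - assert (H0 : hh U W ip 0 d = 0).
    { unfold hh. pose proof (CU open U W ip 0 d 0 (HI 0%nat) ltac:(simpl; lia) ltac:(rewrite lev0; exact Ud)).
      assert (cnt U W ip 0 d = 0%nat) as -> by lia. simpl; ring. }
    pose proof (ff_le U W ip d 0). pose proof (ff_ge0 U W ip d). lra.
  - intros y nWy.
    assert (Hh1 : forall n, hh U W ip n y = 1).
    { intro n. assert (Hc1 : cnt U W ip n y = (2 ^ n)%nat).
      { pose proof (Nat.pow_nonzero 2 n ltac:(lia)). pose proof (cnt_le U W ip n y).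
        destruct (2 ^ n)%nat as [|j] eqn:E; [lia|].
        assert (Hl : ~ lev U W ip n j y).
        { intro Hl. destruct (HI n j ltac:(lia)) as (_&Hs&_). apply nWy, Hs, Hl. }
        pose proof (CL open U W ip n y j (HI n) ltac:(lia) Hl). lia. }
      unfold hh. rewrite Hc1, pow_INR, <- Rpow_mult_distr.
      replace (INR 2 * / 2) with 1 by (simpl; field). apply pow1. }
    pose proof (ff_le U W ip y 0). rewrite Hh1 in H.
    destruct (Rle_lt_or_eq_dec _ _ H) as [Hlt|Heq]; [|lra].
    destruct (small (1 - ff U W ip y)) as [n Hn]; [lra|].
    pose proof (ff_ge open U W ip y n HI). rewrite Hh1 in H0. lra.
Qed.

Theorem mainTheorem5 (K : Type) (open : (K -> Prop) -> Prop)
  (Htop : is_topology open) (Hcpt : compact_space open) (Hhaus : hausdorff open)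
  (Hinf : infinite_type K) :
  forall kappa : Type, biort_le open 1 kappa <-> spread_le open kappa.
Proof.
  intros kappa. split.
  - intros Hb D HD.
    assert (Hex : forall i : {x : K | D x}, exists g, continuous_real open g /\ g (proj1_sig i) = 1 /\
               forall j : {x : K | D x}, j <> i -> g (proj1_sig j) = 0).
    { intros [x Dx]. destruct (HD x Dx) as [W (HW&Wx&HWD)].
      destruct (urys open Htop Hcpt Hhaus x W HW Wx) as [g (Hg&Hgx&Hg0)].
      exists g. split; auto. split; auto. intros [y Dy] Hne. simpl. apply Hg0. intro Wy.
      apply Hne. pose proof (HWD y Dy Wy) as ->. f_equal. apply proof_irrelevance. }
    set (f := fun i => proj1_sig (constructive_indefinite_description _ (Hex i))).
    apply (Hb _ f (fun i _ => proj1_sig i) (fun _ _ => 1)).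
    split; [|split].
    + intro i. unfold f. destruct (constructive_indefinite_description _ (Hex i)) as [g Hgp]. simpl. destruct Hgp as (Hg&_&_). exact Hg.
    + intro i. unfold nsupp_apply, f. simpl.
      destruct (constructive_indefinite_description _ (Hex i)) as [g Hgp]. simpl. destruct Hgp as (_&Hg1&_). rewrite Hg1. ring.
    + intros i j Hne. unfold nsupp_apply, f. simpl.
      destruct (constructive_indefinite_description _ (Hex j)) as [g Hgp]. simpl. destruct Hgp as (_&_&Hg0).
      rewrite (Hg0 i Hne). ring.
  - intros Hs I f pts coef (Hc&H1&H0).
    unfold nsupp_apply in H1, H0. simpl in H1, H0.
    set (D := fun x => exists i, x = pts i 0%nat).
    assert (Hnz : forall i, f i (pts i 0%nat) <> 0).
    { intros i E. specialize (H1 i). rewrite E in H1. lra. }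
    assert (Hz : forall i j, i <> j -> f j (pts i 0%nat) = 0).
    { intros i j Hne. specialize (H0 i j Hne). specialize (H1 i).
      destruct (Req_dec (f j (pts i 0%nat)) 0) as [?|Hn]; auto.
      assert (coef i 0%nat = 0) by (apply (Rmult_eq_reg_r (f j (pts i 0%nat))); auto; lra).
      rewrite H in H1. lra. }
    assert (Heq : forall i j, f i (pts j 0%nat) <> 0 -> i = j).
    { intros i j Hf. apply NNPP; intro Hne. apply Hf, Hz; auto. }
    assert (HD : discrete_subspace open D).
    { intros x [i ->]. exists (fun z => f i z <> 0). split; [|split].
      - apply (Hc i (fun r => r <> 0)). intros r Hr. exists (Rabs r). split; [apply Rabs_pos_lt; auto|].
        intros z Hzr Ez. subst z. rewrite Rminus_0_l, Rabs_Ropp in Hzr. lra.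
      - apply Hnz.
      - intros y [j ->] Hf. rewrite (Heq i j Hf). reflexivity. }
    destruct (Hs D HD) as [g Hg].
    exists (fun i => g (exist D (pts i 0%nat) (ex_intro _ i eq_refl))).
    intros i j E. apply Hg in E. apply (f_equal (@proj1_sig _ _)) in E. simpl in E.
    apply Heq. rewrite <- E. apply Hnz.
Qed.
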